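(* Let $P_0,P_1,P_2\in\mathbb H$ be distinct, and let $\alpha:=-1+\langle P_0,P_1\rangle+\langle P_1,P_2\rangle+\langle P_2,P_0\rangle$ and $\chi:=\langle P_0\tilde\times P_1,P_2\rangle$. Let $Q_0,Q_2\in\mathbb H$ be such that $P_0P_1Q_2$ and $P_1P_2Q_0$ are equilateral, and let $R_2$, $R_0$ be the centroids of $P_0P_1Q_2$ and $P_1P_2Q_0$ respectively; let $\varepsilon_0,\varepsilon_2\in\{-1,1\}$ be the signs with $$R_2=\frac{\sqrt{1-2\langle P_0,P_1\rangle}(P_0+P_1)+\varepsilon_2P_0\tilde\times P_1}{\sqrt3(1-\langle P_0,P_1\rangle)},\quad R_0=\frac{\sqrt{1-2\langle P_1,P_2\rangle}(P_1+P_2)+\varepsilon_0P_1\tilde\times P_2}{\sqrt3(1-\langle P_1,P_2\rangle)}.$$ Then $$\begin{aligned}&3(1-\langle P_0,P_1\rangle)(1-\langle P_1,P_2\rangle)\langle R_2,R_0\rangle=\alpha\sqrt{1-2\langle P_0,P_1\rangle}\sqrt{1-2\langle P_1,P_2\rangle}\\&\quad+\chi\Bigl(\varepsilon_0\sqrt{1-2\langle P_0,P_1\rangle}+\varepsilon_2\sqrt{1-2\langle P_1,P_2\rangle}\Bigr)-\varepsilon_2\varepsilon_0\bigl(\langle P_0,P_1\rangle\langle P_1,P_2\rangle+\langle P_0,P_2\rangle\bigr).\end{aligned}$$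
   Context: $\langle v,w\rangle=-v_1w_1+v_2w_2+v_3w_3$ on $\mathbb R^3$; $\mathbb H=\{P\in\mathbb R^3:\langle P,P\rangle=-1,\ P_1\ge1\}$; $v\tilde\times w:=J(v\times w)$ with $J=\mathrm{diag}(-1,1,1)$ and $\times$ the Euclidean cross product. A triangle $ABC$ in $\mathbb H$ is equilateral if $\langle A,B\rangle=\langle B,C\rangle=\langle C,A\rangle$; its centroid is $(A+B+C)/\sqrt{-\langle A+B+C,A+B+C\rangle}$. *)

(* Defs.v *)
From HB Require Import structures.
From mathcomp Require Import all_boot all_order all_algebra.
From mathcomp Require Import reals.
Set Implicit Arguments. Unset Strict Implicit. Unset Printing Implicit Defensive.
Import Order.TTheory GRing.Theory Num.Theory.
Local Open Scope ring_scope.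

Record vec3 (R : realType) := V3 { c1 : R; c2 : R; c3 : R }.

Definition vadd (R : realType) (v w : vec3 R) : vec3 R :=
  V3 (c1 v + c1 w) (c2 v + c2 w) (c3 v + c3 w).
Definition vscale (R : realType) (a : R) (v : vec3 R) : vec3 R :=
  V3 (a * c1 v) (a * c2 v) (a * c3 v).

Definition mink (R : realType) (v w : vec3 R) : R :=
  - (c1 v * c1 w) + c2 v * c2 w + c3 v * c3 w.

Definition inH (R : realType) (P : vec3 R) : Prop :=
  mink P P = -1 /\ 1 <= c1 P.

Definition ecross (R : realType) (v w : vec3 R) : vec3 R :=
  V3 (c2 v * c3 w - c3 v * c2 w)
     (c3 v * c1 w - c1 v * c3 w)
     (c1 v * c2 w - c2 v * c1 w).
Definition Jmap (R : realType) (v : vec3 R) : vec3 R := V3 (- c1 v) (c2 v) (c3 v).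
Definition lcross (R : realType) (v w : vec3 R) : vec3 R := Jmap (ecross v w).

Definition equilateral (R : realType) (A B C : vec3 R) : Prop :=
  mink A B = mink B C /\ mink B C = mink C A.

Definition centroid (R : realType) (A B C : vec3 R) : vec3 R :=
  let S := vadd (vadd A B) C in
  vscale (Num.sqrt (- mink S S))^-1 S.

(* Main.v *)
Require Import Defs.
From HB Require Import structures.
From mathcomp Require Import all_boot all_order all_algebra.
From mathcomp Require Import reals.
From mathcomp Require Import ring lra.
Import Order.TTheory GRing.Theory Num.Theory.
Local Open Scope ring_scope.

Lemma key (R : realType) (P0 P1 P2 : vec3 R) (e0 e2 sa sb : R) :
  mink (vadd (vscale sa (vadd P0 P1)) (vscale e2 (lcross P0 P1)))
       (vadd (vscale sb (vadd P1 P2)) (vscale e0 (lcross P1 P2))) =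
  (-1 + mink P0 P1 + mink P1 P2 + mink P2 P0) * sa * sb
    + mink (lcross P0 P1) P2 * (e0 * sa + e2 * sb)
    - e2 * e0 * (mink P0 P1 * mink P1 P2 + mink P0 P2)
  + (sa * sb + e2 * e0 * mink P0 P2) * (mink P1 P1 + 1).
Proof.
case: P0 => x0 y0 z0; case: P1 => x1 y1 z1; case: P2 => x2 y2 z2.
rewrite /mink /vadd /vscale /lcross /Jmap /ecross /=. ring.
Qed.

Lemma mink_lt1 (R : realType) (P Q : vec3 R) : inH P -> inH Q -> mink P Q < 1.
Proof.
case: P => x y z; case: Q => u v w; rewrite /inH /mink /= => [[h1 h2] [h3 h4]].
have hx : 0 <= x by lra.
have hu : 0 <= u by lra.
have e : (x*u)^+2 - (1 + y*v + z*w)^+2 = (y-v)^+2 + (z-w)^+2 + (y*w-z*v)^+2.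
  have ex : x^+2 = 1 + y*y + z*z by rewrite expr2; lra.
  have eu : u^+2 = 1 + v*v + w*w by rewrite expr2; lra.
  by rewrite exprMn ex eu; ring.
have hp : 0 <= x*u by apply: mulr_ge0.
have : (1 + y*v + z*w)^+2 <= (x*u)^+2.
  rewrite -subr_ge0 e. by rewrite !addr_ge0 // sqr_ge0.
move=> hle.
have : 1 + y*v + z*w <= x*u.
  case: (lerP (1 + y*v + z*w) 0) => h; first lra.
  by rewrite -(ler_pXn2r (n:=2)) // ?nnegrE; lra.
nra.
Qed.

Lemma mink_scale (R : realType) (k l : R) (X Y : vec3 R) :
  mink (vscale k X) (vscale l Y) = k * l * mink X Y.
Proof. case: X => ? ? ?; case: Y => ? ? ?; rewrite /mink /vscale /=; ring. Qed.

Theorem lemma3p1 (R : realType) (P0 P1 P2 Q0 Q2 : vec3 R) (e0 e2 : R) :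
  inH P0 -> inH P1 -> inH P2 ->
  P0 <> P1 -> P1 <> P2 -> P0 <> P2 ->
  inH Q0 -> inH Q2 ->
  equilateral P0 P1 Q2 -> equilateral P1 P2 Q0 ->
  (e0 = 1 \/ e0 = -1) -> (e2 = 1 \/ e2 = -1) ->
  centroid P0 P1 Q2 =
    vscale (Num.sqrt 3 * (1 - mink P0 P1))^-1
      (vadd (vscale (Num.sqrt (1 - 2 * mink P0 P1)) (vadd P0 P1))
            (vscale e2 (lcross P0 P1))) ->
  centroid P1 P2 Q0 =
    vscale (Num.sqrt 3 * (1 - mink P1 P2))^-1
      (vadd (vscale (Num.sqrt (1 - 2 * mink P1 P2)) (vadd P1 P2))
            (vscale e0 (lcross P1 P2))) ->
  let alpha := -1 + mink P0 P1 + mink P1 P2 + mink P2 P0 in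
  let chi := mink (lcross P0 P1) P2 in
  let R2 := centroid P0 P1 Q2 in
  let R0 := centroid P1 P2 Q0 in
  3 * (1 - mink P0 P1) * (1 - mink P1 P2) * mink R2 R0 =
    alpha * Num.sqrt (1 - 2 * mink P0 P1) * Num.sqrt (1 - 2 * mink P1 P2)
    + chi * (e0 * Num.sqrt (1 - 2 * mink P0 P1) + e2 * Num.sqrt (1 - 2 * mink P1 P2))
    - e2 * e0 * (mink P0 P1 * mink P1 P2 + mink P0 P2).
Proof.
move=> H0 H1 H2 _ _ _ _ _ _ _ _ _ E2 E0 alpha chi R2 R0.
rewrite /R2 /R0 E2 E0 mink_scale key.
have -> : mink P1 P1 = -1 by case: H1.
have ha : 1 - mink P0 P1 != 0 by rewrite subr_eq0 eq_sym lt_eqF // mink_lt1.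
have hb : 1 - mink P1 P2 != 0 by rewrite subr_eq0 eq_sym lt_eqF // mink_lt1.
have h3 : Num.sqrt (3 : R) ^+ 2 = 3 by rewrite sqr_sqrtr.
have h3' : Num.sqrt (3 : R) != 0 by rewrite sqrtr_eq0 -ltNge.
rewrite /alpha /chi.
set a := mink P0 P1 in ha *; set b := mink P1 P2 in hb *.
set t := Num.sqrt (3 : R) in h3 h3' *.
rewrite -h3. field. by rewrite ha hb h3'.
Qed.
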